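(* Let $\mathbb{F}=\mathbb{R}$ or $\mathbb{C}$ and let $\{\mathcal{W}_i\}_{i=1}^n$ be a collection of $m$-dimensional subspaces of $\mathbb{F}^k$. Consider the collection of orthogonal complements $\{\mathcal{W}_i^\perp\}_{i=1}^n$, which are $(k-m)$-dimensional subspaces of $\mathbb{F}^k$. Then: (1) $\{\mathcal{W}_i\}_{i=1}^n$ is a tight fusion frame if and only if $\{\mathcal{W}_i^\perp\}_{i=1}^n$ is a tight fusion frame; (2) $\{\mathcal{W}_i\}_{i=1}^n$ is an equichordal tight fusion frame if and only if $\{\mathcal{W}_i^\perp\}_{i=1}^n$ is an equichordal tight fusion frame; (3) $\{\mathcal{W}_i\}_{i=1}^n$ is a strongly simplicial tight fusion frame if and only if $\{\mathcal{W}_i^\perp\}_{i=1}^n$ is a strongly simplicial tight fusion frame; (4) $\{\mathcal{W}_i\}_{i=1}^n$ is an orthoplectic Grassmannian packing if and only if $\{\mathcal{W}_i^\perp\}_{i=1}^n$ is an orthoplectic Grassmannian packing.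
   Context: For $d$-dimensional subspaces $\{\mathcal{V}_i\}_{i=1}^n$ of $\mathbb{F}^k$ let $L_i$ be a matrix whose columns form an orthonormal basis of $\mathcal{V}_i$ and $P_i=L_iL_i^*$. Chordal distance: $d_c(\mathcal{V}_i,\mathcal{V}_j)=[d-\operatorname{trace}(P_iP_j)]^{1/2}$. The collection is a tight fusion frame if $\sum_iP_i=AI_k$ for some $A>0$; equichordal if $\operatorname{trace}(L_i^*L_jL_j^*L_i)$ is the same for all $i\ne j$; strongly simplicial if $L_i^*L_jL_j^*L_i$ has the same set of eigenvalues for all $i\ne j$. Let $\mathcal{Z}(\mathbb{C},k)=k^2$, $\mathcal{Z}(\mathbb{R},k)=k(k+1)/2$. The collection is an orthoplectic Grassmannian packing if $\mathcal{Z}(\mathbb{F},k)<n\le 2(\mathcal{Z}(\mathbb{F},k)-1)$ and $\min_{i\ne j}d_c^2(\mathcal{V}_i,\mathcal{V}_j)=d(k-d)/k$. *)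

(* Defs.v *)
(* F = R or C is modelled inside a numeric closed field C
   (e.g. algC or complex R for R : rcfType): the complex case uses arbitrary
   matrices over C, the real case uses matrices all of whose entries are real. *)
From mathcomp Require Import all_boot all_order all_algebra.
Set Implicit Arguments. Unset Strict Implicit. Unset Printing Implicit Defensive.
Import Order.TTheory GRing.Theory Num.Theory.
Local Open Scope ring_scope.

Section FusionFrames.
Variable C : numClosedFieldType.

Definition adjmx (p q : nat) (A : 'M[C]_(p, q)) : 'M[C]_(q, p) :=
  (map_mx Num.conj A)^T.

Definition orthonormal_cols (k d : nat) (L : 'M[C]_(k, d)) : Prop :=
  adjmx L *m L = 1%:M.

Definition real_mx (p q : nat) (A : 'M[C]_(p, q)) : Prop :=
  forall i j, A i j \is Num.real.

Definition proj (k d : nat) (L : 'M[C]_(k, d)) : 'M[C]_k := L *m adjmx L.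

Definition chordal_dist2 (n k d : nat) (L : 'I_n -> 'M[C]_(k, d)) (i j : 'I_n) : C :=
  d%:R - \tr (proj (L i) *m proj (L j)).

Definition tight_fusion_frame (n k d : nat) (L : 'I_n -> 'M[C]_(k, d)) : Prop :=
  exists A : C, 0 < A /\ \sum_(i < n) proj (L i) = A%:M.

Definition cross_gram (n k d : nat) (L : 'I_n -> 'M[C]_(k, d)) (i j : 'I_n) : 'M[C]_d :=
  adjmx (L i) *m L j *m adjmx (L j) *m L i.

Definition equichordal (n k d : nat) (L : 'I_n -> 'M[C]_(k, d)) : Prop :=
  exists c : C, forall i j : 'I_n, i != j -> \tr (cross_gram L i j) = c.

(* same eigenvalues (with multiplicity) = same characteristic polynomial *)
Definition strongly_simplicial (n k d : nat) (L : 'I_n -> 'M[C]_(k, d)) : Prop :=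
  exists p : {poly C}, forall i j : 'I_n, i != j -> char_poly (cross_gram L i j) = p.

(* Z(F,k): k(k+1)/2 if F = R (realF = true), k^2 if F = C *)
Definition Zdim (realF : bool) (k : nat) : nat :=
  if realF then (k * k.+1)./2 else (k ^ 2)%N.

Definition orthoplectic_packing (realF : bool) (n k d : nat)
    (L : 'I_n -> 'M[C]_(k, d)) : Prop :=
  [/\ (Zdim realF k < n)%N, (n <= 2 * (Zdim realF k - 1))%N,
      (forall i j : 'I_n, i != j ->
          (d * (k - d))%:R / k%:R <= chordal_dist2 L i j) &
      (exists i j : 'I_n, i != j /\
          chordal_dist2 L i j = (d * (k - d))%:R / k%:R)].

End FusionFrames.

(* Main.v *)
Require Import Defs.
From mathcomp Require Import all_boot all_order all_algebra.
From mathcomp Require Import ring.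
Set Implicit Arguments. Unset Strict Implicit. Unset Printing Implicit Defensive.
Import Order.TTheory GRing.Theory Num.Theory.
Local Open Scope ring_scope.

Section Aux.
Variable C : numClosedFieldType.

Lemma adjmxM p q r (A : 'M[C]_(p, q)) (B : 'M[C]_(q, r)) :
  adjmx (A *m B) = adjmx B *m adjmx A.
Proof. by rewrite /adjmx map_mxM trmx_mul. Qed.

Lemma adjmxK p q (A : 'M[C]_(p, q)) : adjmx (adjmx A) = A.
Proof. by apply/matrixP => i j; rewrite /adjmx !mxE conjCK. Qed.

Lemma adjmx_row p q1 q2 (A : 'M[C]_(p, q1)) (B : 'M[C]_(p, q2)) :
  adjmx (row_mx A B) = col_mx (adjmx A) (adjmx B).
Proof. by rewrite /adjmx map_row_mx tr_row_mx. Qed.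

Lemma sq_inv k p (U : 'M[C]_(k, p)) (V : 'M[C]_(p, k)) :
  p = k -> V *m U = 1%:M -> U *m V = 1%:M.
Proof. by move=> e; subst p; apply: mulmx1C. Qed.

Lemma compl_proj k a b (L : 'M[C]_(k, a)) (M : 'M[C]_(k, b)) :
  (a + b = k)%N -> orthonormal_cols L -> orthonormal_cols M ->
  adjmx L *m M = 0 -> proj L + proj M = 1%:M.
Proof.
move=> e oL oM hLM.
have := @sq_inv k (a + b) (row_mx L M) (adjmx (row_mx L M)) e.
rewrite adjmx_row mul_col_row mul_row_col oL oM hLM.
have -> : adjmx M *m L = 0 by rewrite -[L]adjmxK -adjmxM hLM /adjmx map_mx0 trmx0.
by rewrite -scalar_mx_block; apply.
Qed.

Definition fpol d (p : {poly C}) : {poly C} := (-1) ^+ d * (p \Po (1 - 'X)).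

Lemma char_poly_1B d (X : 'M[C]_d) : char_poly (1%:M - X) = fpol d (char_poly X).
Proof.
rewrite /fpol /char_poly -det_map_mx -detZ; congr (\det _).
apply/matrixP => i j; rewrite /char_poly_mx !mxE.
case: (i == j); rewrite /= ?mulr1n ?mulr0n ?comp_polyC ?comp_polyB ?comp_polyX ?comp_polyC ?rmorphB /=.
all: rewrite ?polyC1 ?polyC0; ring.
Qed.
Lemma sylvester p q (A : 'M[C]_(p, q)) (B : 'M[C]_(q, p)) :
  'X^q * char_poly (A *m B) = 'X^p * char_poly (B *m A).
Proof.
rewrite /char_poly /char_poly_mx !map_mxM.
set Ap := map_mx polyC A; set Bp := map_mx polyC B.
pose N := block_mx ('X%:M : 'M_p) Ap Bp (1%:M : 'M_q).
have h1 : N = block_mx 1%:M Ap 0 1%:M *m block_mx ('X%:M - Ap *m Bp) 0 Bp 1%:M.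
  by rewrite mulmx_block !mul1mx !mul0mx ?mulmx1 ?mulmx0 ?add0r ?addr0 ?subrK.
have h2 : N *m block_mx 1%:M (- Ap) 0 ('X%:M) = block_mx ('X%:M) 0 Bp ('X%:M - Bp *m Ap).
  rewrite mulmx_block !mulmx1 ?mulmx0 ?addr0 !mulmxN mul_scalar_mx [Ap *m _]mul_mx_scalar -mul_scalar_mx addNr.
  by rewrite ?mul1mx ?scale1r addrC.
have := congr1 determinant h2.
rewrite det_mulmx det_ublock det_lblock !det_scalar h1 det_mulmx.
rewrite det_ublock det_lblock !det_scalar expr1n !mul1r ?mulr1 => <-.
by rewrite expr1n mul1r mulr1 mulrC.
Qed.

Lemma char_poly_sym p (A : 'M[C]_(p, p)) (B : 'M[C]_(p, p)) :
  char_poly (A *m B) = char_poly (B *m A).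
Proof.
apply: (@mulfI _ ('X^p)); first by rewrite expf_neq0 // polyX_eq0.
exact: sylvester.
Qed.

End Aux.
Section Gen.
Variables (C : numClosedFieldType) (n a b k : nat).
Variables (L : 'I_n -> 'M[C]_(k, a)) (M : 'I_n -> 'M[C]_(k, b)).
Hypotheses (oL : forall i, orthonormal_cols (L i)) (oM : forall i, orthonormal_cols (M i)).
Hypothesis hc : forall i, proj (L i) + proj (M i) = 1%:M.

Lemma projM i : proj (M i) = 1%:M - proj (L i).
Proof. by rewrite -(hc i) addrC addKr. Qed.

Lemma projL i : proj (L i) = 1%:M - proj (M i).
Proof. by rewrite -(hc i) addrK. Qed.

Definition DD i j := adjmx (M i) *m L j.
Definition EE i j := adjmx (L j) *m L i.

Lemma cgM i j : cross_gram M i j = 1%:M - DD i j *m adjmx (DD i j).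
Proof.
rewrite /cross_gram /DD adjmxM adjmxK -(mulmxA _ (M j)) -/(proj (M j)) projM.
by rewrite mulmxBr mulmxBl mulmx1 oM !mulmxA.
Qed.

Lemma DstarD i j : adjmx (DD i j) *m DD i j = 1%:M - cross_gram L j i.
Proof.
rewrite /cross_gram /DD adjmxM adjmxK !mulmxA -(mulmxA (adjmx (L j)) (M i)) -/(proj (M i)) projM.
by rewrite mulmxBr mulmxBl mulmx1 oL !mulmxA.
Qed.

Lemma cgLji i j : cross_gram L j i = EE i j *m adjmx (EE i j).
Proof. by rewrite /cross_gram /EE adjmxM adjmxK !mulmxA. Qed.

Lemma cgLij i j : cross_gram L i j = adjmx (EE i j) *m EE i j.
Proof. by rewrite /cross_gram /EE adjmxM adjmxK !mulmxA. Qed.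

Lemma tr_cgM i j : \tr (cross_gram M i j) = b%:R - a%:R + \tr (cross_gram L i j).
Proof.
rewrite cgM raddfB /= mxtrace1 mxtrace_mulC DstarD raddfB /= mxtrace1.
rewrite cgLji mxtrace_mulC -cgLij.
by ring.
Qed.

Lemma tr_proj_cg (d : nat) (N : 'I_n -> 'M[C]_(k, d)) i j :
  \tr (proj (N i) *m proj (N j)) = \tr (cross_gram N i j).
Proof.
by rewrite /proj /cross_gram -!mulmxA mxtrace_mulC !mulmxA.
Qed.

Lemma chordal_eq i j : chordal_dist2 M i j = chordal_dist2 L i j.
Proof.
rewrite /chordal_dist2 !tr_proj_cg tr_cgM.
by ring.
Qed.

Lemma equichordal_LM : equichordal L -> equichordal M.
Proof.
case=> c hc'; exists (b%:R - a%:R + c) => i j hij.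
by rewrite tr_cgM hc'.
Qed.

Lemma char_cgM i j : exists q, char_poly (cross_gram M i j) = fpol b q /\
   'X^a * q = 'X^b * fpol a (char_poly (cross_gram L i j)).
Proof.
exists (char_poly (DD i j *m adjmx (DD i j))); split.
  by rewrite cgM char_poly_1B.
by rewrite sylvester DstarD char_poly_1B cgLji char_poly_sym -cgLij.
Qed.

Lemma ss_LM : strongly_simplicial L -> strongly_simplicial M.
Proof.
case=> p hp.
case: (pickP (fun ij : 'I_n * 'I_n => ij.1 != ij.2)) => [[i0 j0] /= h0 | none].
  exists (char_poly (cross_gram M i0 j0)) => i j hij.
  have [q1 [e1 f1]] := char_cgM i j.
  have [q0 [e0 f0]] := char_cgM i0 j0.
  rewrite e1 e0; congr (fpol b _).
  apply: (@mulfI _ ('X^a)); first by rewrite expf_neq0 // polyX_eq0.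
  by rewrite f1 f0 hp // hp.
exists 0 => i j hij; have := none (i, j); by rewrite /= hij.
Qed.

Lemma tr_projL i : \tr (proj (L i)) = a%:R.
Proof. by rewrite /proj mxtrace_mulC oL mxtrace1. Qed.

Lemma tr_projM i : \tr (proj (M i)) = b%:R.
Proof. by rewrite /proj mxtrace_mulC oM mxtrace1. Qed.

Lemma tff_LM : (0 < k)%N -> (0 < b)%N -> tight_fusion_frame L -> tight_fusion_frame M.
Proof.
move=> k0 b0 [A [A0 hA]].
have trA : n%:R * a%:R = A * k%:R :> C.
  have := congr1 mxtrace hA; rewrite mxtrace_scalar raddf_sum /=.
  rewrite (eq_bigr (fun _ => a%:R)) ?sumr_const ?card_ord; last by move=> i _; exact: tr_projL.
  by rewrite mulr_natl mulr_natr => ->.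
have n0 : (0 < n)%N.
  rewrite lt0n; apply/negP => /eqP n0; move: trA; rewrite n0 mul0r => /esym/eqP.
  rewrite mulf_eq0 (gt_eqF A0) pnatr_eq0 /= => /eqP k00; by rewrite k00 in k0.
have hab : a%:R + b%:R = k%:R :> C.
  have := congr1 mxtrace (hc (Ordinal n0)).
  by rewrite raddfD /= tr_projL tr_projM mxtrace1.
exists (n%:R - A); split.
  have e : (n%:R - A) * k%:R = n%:R * b%:R :> C.
    by rewrite mulrBl -trA -hab; ring.
  by rewrite -(pmulr_lgt0 _ (_ : 0 < k%:R :> C)) ?e ?mulr_gt0 // ?ltr0n.
rewrite (eq_bigr (fun i => 1%:M - proj (L i))); last by move=> i _; exact: projM.
by rewrite sumrB hA sumr_const card_ord raddfB raddfMn.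
Qed.
End Gen.
Unset Implicit Arguments.

Theorem mainTheorem8 (C : numClosedFieldType) (realF : bool) (n k m : nat)
    (L : 'I_n -> 'M[C]_(k, m)) (M : 'I_n -> 'M[C]_(k, k - m)) :
  (0 < m)%N -> (m < k)%N ->
  (realF -> forall i, real_mx (L i) /\ real_mx (M i)) ->
  (forall i, orthonormal_cols (L i)) ->
  (forall i, orthonormal_cols (M i)) ->
  (forall i, adjmx (L i) *m M i = 0) ->
  [/\ tight_fusion_frame L <-> tight_fusion_frame M,
      equichordal L /\ tight_fusion_frame L <->
        equichordal M /\ tight_fusion_frame M,
      strongly_simplicial L /\ tight_fusion_frame L <->
        strongly_simplicial M /\ tight_fusion_frame M &
      orthoplectic_packing realF L <-> orthoplectic_packing realF M].
Proof.
move=> m0 mk _ oL oM hLM.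
have hc : forall i, proj (L i) + proj (M i) = 1%:M.
  by move=> i; apply: compl_proj => //; rewrite subnKC // ltnW.
have hc' : forall i, proj (M i) + proj (L i) = 1%:M by move=> i; rewrite addrC.
have k0 : (0 < k)%N by apply: leq_trans mk.
have km0 : (0 < k - m)%N by rewrite subn_gt0.
have t1 : tight_fusion_frame L <-> tight_fusion_frame M.
  split; [exact: (tff_LM oL oM hc k0 km0) | exact: (tff_LM oM oL hc' k0 m0)].
split; first exact: t1.
- split=> [[e t]|[e t]]; (split; last by apply/t1).
  + exact: (equichordal_LM oL oM hc e).
  + exact: (equichordal_LM oM oL hc' e).
- split=> [[e t]|[e t]]; (split; last by apply/t1).
  + exact: (ss_LM oL oM hc e).
  + exact: (ss_LM oM oL hc' e).
- have ce := chordal_eq oL oM hc.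
  have dd : ((k - m) * (k - (k - m)))%N = (m * (k - m))%N.
    rewrite (subKn (ltnW mk)); exact: mulnC.
  rewrite /orthoplectic_packing dd.
  split=> [[h1 h2 h3 [i [j [hij e]]]] | [h1 h2 h3 [i [j [hij e]]]]]; split.
  + exact: h1.
  + exact: h2.
  + by move=> i' j' h; rewrite ce; apply: h3.
  + by exists i, j; rewrite ce.
  + exact: h1.
  + exact: h2.
  + by move=> i' j' h; rewrite -ce; apply: h3.
  + by exists i, j; rewrite -ce.
Qed.
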